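(* For every $\alpha\in(0,1)$ and $\delta>0$, $$L(\alpha;\delta)>\frac4\delta\Big(1-\frac{\pi^2}{16}-\frac12\alpha^2\Big).$$
   Context: For $s\ge0$ let $\phi_1(s)=\int_0^{\pi/2}\frac{\sin^2\theta}{(\sin^2\theta+s^2)^{1/2}}d\theta$ (strictly decreasing from $1$ to $0$, inverse $\phi_1^{-1}:(0,1]\to[0,\infty)$) and $\phi_2(s)=\int_0^{\pi/2}\frac{2\sin^2\theta+s^2}{(\sin^2\theta+s^2)^{1/2}}d\theta$. For $\alpha\in(0,1)$, $\delta>0$: $L(\alpha;\delta)=\frac4\delta\Big(1-\frac{\phi_2^2(\phi_1^{-1}(\alpha))}{4[1+(\phi_1^{-1}(\alpha))^2]}\Big)$. *)

(* Defs.v *)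
From Stdlib Require Import Reals Lra ClassicalEpsilon.
Open Scope R_scope.

(* Riemann integral of f over [a,b]: the common value of RiemannInt pr for
   any integrability proof pr (RiemannInt is proof-independent); chosen by
   Hilbert's epsilon (only meaningful when f is Riemann integrable). *)
Definition RInt (f : R -> R) (a b : R) : R :=
  epsilon (inhabits 0)
    (fun I => exists pr : Riemann_integrable f a b, RiemannInt pr = I).

Definition phi1 (s : R) : R :=
  RInt (fun t => (sin t) ^ 2 / sqrt ((sin t) ^ 2 + s ^ 2)) 0 (PI / 2).

Definition phi2 (s : R) : R :=
  RInt (fun t => (2 * (sin t) ^ 2 + s ^ 2) / sqrt ((sin t) ^ 2 + s ^ 2)) 0 (PI / 2).

(* phi_1^{-1}(a): the (unique, phi_1 being strictly decreasing) s >= 0 with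
   phi_1(s) = a. *)
Definition phi1_inv (a : R) : R :=
  epsilon (inhabits 0) (fun s => 0 <= s /\ phi1 s = a).

Definition L (alpha delta : R) : R :=
  let s := phi1_inv alpha in
  4 / delta * (1 - (phi2 s) ^ 2 / (4 * (1 + s ^ 2))).

(* Main.v *)
Require Import Defs.
From Stdlib Require Import Reals Lra ClassicalEpsilon.
From Coquelicot Require Import Coquelicot.
Open Scope R_scope.

Lemma bridge (f : R -> R) a b : ex_RInt f a b -> Defs.RInt f a b = RInt f a b.
Proof.
  intros H. unfold Defs.RInt.
  pose proof (ex_RInt_Reals_0 _ _ _ H) as pr.
  destruct (epsilon_spec (inhabits 0)
    (fun I => exists pr : Riemann_integrable f a b, RiemannInt pr = I)) as [pr' E].
  { exists (RiemannInt pr). exists pr. reflexivity. }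
  rewrite <- E. symmetry. apply RInt_Reals.
Qed.

Definition F1 (s t : R) := (sin t) ^ 2 / sqrt ((sin t) ^ 2 + s ^ 2).

Lemma F1_lip (a b t : R) : Rabs (F1 a t - F1 b t) <= Rabs (a - b).
Proof.
  unfold F1. set (x := sin t ^ 2).
  assert (Hx : 0 <= x) by (unfold x; nra).
  destruct (Req_dec x 0) as [E|Hx0].
  { rewrite E. unfold Rdiv. rewrite !Rmult_0_l, Rminus_0_r, Rabs_R0. apply Rabs_pos. }
  assert (Hxp : 0 < x) by lra.
  set (A := sqrt (x + a^2)). set (B := sqrt (x + b^2)).
  assert (HA : 0 < A) by (apply sqrt_lt_R0; nra).
  assert (HB : 0 < B) by (apply sqrt_lt_R0; nra).
  assert (HA2 : A * A = x + a^2) by (apply sqrt_sqrt; nra).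
  assert (HB2 : B * B = x + b^2) by (apply sqrt_sqrt; nra).
  assert (Ha : Rabs a <= A).
  { rewrite <- sqrt_Rsqr_abs. apply sqrt_le_1_alt. unfold Rsqr. nra. }
  assert (Hb : Rabs b <= B).
  { rewrite <- sqrt_Rsqr_abs. apply sqrt_le_1_alt. unfold Rsqr. nra. }
  assert (Hxab : x <= A * B).
  { assert (sqrt x <= A) by (apply sqrt_le_1_alt; nra).
    assert (sqrt x <= B) by (apply sqrt_le_1_alt; nra).
    assert (sqrt x * sqrt x = x) by (apply sqrt_sqrt; lra).
    assert (0 <= sqrt x) by apply sqrt_pos. nra. }
  replace (x / A - x / B) with (x / (A * B) * ((b - a) * (b + a) / (A + B))).
  2:{ replace ((b - a) * (b + a)) with (B*B - A*A) by nra.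
      field. lra. }
  rewrite Rabs_mult.
  assert (Rabs (x / (A*B)) <= 1).
  { rewrite Rabs_pos_eq. apply (proj1 (Rcomplements.Rdiv_le_1 x (A*B) ltac:(nra))). exact Hxab.
    apply Rdiv_le_0_compat; nra. }
  assert (Rabs ((b - a) * (b + a) / (A + B)) <= Rabs (a - b)).
  { unfold Rdiv. rewrite !Rabs_mult. rewrite (Rabs_pos_eq (/ (A+B))).
    2:{ left. apply Rinv_0_lt_compat. lra. }
    rewrite (Rabs_minus_sym b a).
    assert (Rabs (b + a) <= A + B) by (pose proof (Rabs_triang b a); lra).
    assert (Rabs (b + a) * / (A + B) <= 1).
    { apply (proj1 (Rcomplements.Rdiv_le_1 (Rabs (b+a)) (A+B) ltac:(lra))); lra. }
    pose proof (Rabs_pos (a - b)). nra. }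
  pose proof (Rabs_pos (x / (A*B))). pose proof (Rabs_pos ((b - a) * (b + a) / (A + B))).
  nra.
Qed.

Lemma F1_zero t : 0 < t < PI -> F1 0 t = sin t.
Proof.
  intros H. pose proof (sin_gt_0 t (proj1 H) (proj2 H)). unfold F1.
  replace (sin t ^ 2 + 0 ^ 2) with (sin t ^ 2) by ring.
  rewrite sqrt_pow2 by lra. field. lra.
Qed.

Lemma F1_cont s t : s <> 0 -> continuous (F1 s) t.
Proof.
  intros Hs. apply (@ex_derive_continuous R_AbsRing R_NormedModule). unfold F1.
  assert (0 < sin t ^ 2 + s ^ 2) by nra.
  auto_derive. split; [lra|split; [|exact I]].
  apply Rgt_not_eq. apply sqrt_lt_R0. lra.
Qed.

Lemma PI2_pos : 0 < PI / 2.
Proof. pose proof PI_RGT_0. lra. Qed.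

Lemma F1_ex s : ex_RInt (F1 s) 0 (PI/2).
Proof.
  destruct (Req_dec s 0) as [->|Hs].
  - apply ex_RInt_ext with sin.
    { intros x Hx. rewrite Rmin_left in Hx by (pose proof PI2_pos; lra).
      rewrite Rmax_right in Hx by (pose proof PI2_pos; lra).
      symmetry. apply F1_zero. pose proof PI_RGT_0; lra. }
    apply (ex_RInt_continuous (V:=R_CompleteNormedModule)). intros z _. apply continuous_sin.
  - apply (ex_RInt_continuous (V:=R_CompleteNormedModule)). intros z _. now apply F1_cont.
Qed.

Lemma phi1_eq s : phi1 s = RInt (F1 s) 0 (PI/2).
Proof. unfold phi1. rewrite bridge. reflexivity. apply F1_ex. Qed.

Lemma phi1_0 : phi1 0 = 1.
Proof.
  rewrite phi1_eq. rewrite (RInt_ext _ sin).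
  2:{ intros x Hx. rewrite Rmin_left in Hx by (pose proof PI2_pos; lra).
      rewrite Rmax_right in Hx by (pose proof PI2_pos; lra).
      apply F1_zero. pose proof PI_RGT_0; lra. }
  rewrite (is_RInt_unique sin 0 (PI/2) (minus (- cos (PI/2)) (- cos 0))).
  - rewrite cos_PI2, cos_0. unfold minus, plus, opp. simpl. ring.
  - apply (is_RInt_derive (fun x => - cos x)).
    + intros x _. auto_derive. exact I. ring.
    + intros x _. apply continuous_sin.
Qed.

Lemma phi1_lip a b : Rabs (phi1 a - phi1 b) <= PI / 2 * Rabs (a - b).
Proof.
  rewrite !phi1_eq.
  pose proof (F1_ex a). pose proof (F1_ex b).
  assert (E : RInt (F1 a) 0 (PI/2) - RInt (F1 b) 0 (PI/2) = RInt (fun t => F1 a t - F1 b t) 0 (PI/2)).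
  { symmetry. apply (RInt_minus (V:=R_CompleteNormedModule)); auto. }
  rewrite E.
  eapply Rle_trans. apply abs_RInt_le. pose proof PI2_pos; lra.
  apply (ex_RInt_minus (V:=R_CompleteNormedModule)); auto.
  eapply Rle_trans. apply (RInt_le _ (fun _ => Rabs (a - b))).
  pose proof PI2_pos; lra.
  apply (ex_RInt_norm (fun t => F1 a t - F1 b t)).
  apply (ex_RInt_minus (V:=R_CompleteNormedModule)); auto.
  apply ex_RInt_const.
  intros; apply F1_lip.
  rewrite RInt_const. unfold scal; simpl; unfold mult; simpl. lra.
Qed.

Lemma phi1_cont : continuity phi1.
Proof.
  intros x0 eps Heps. pose proof PI_RGT_0.
  exists (eps / PI). split. apply Rdiv_lt_0_compat; lra.
  intros x [_ Hx]. unfold R_dist in *.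
  eapply Rle_lt_trans. apply phi1_lip.
  apply Rmult_lt_compat_l with (r := PI/2) in Hx; [|lra].
  replace (PI/2 * (eps/PI)) with (eps/2) in Hx by (field; lra). simpl in Hx; unfold R_dist in Hx. lra.
Qed.

Lemma phi1_upper S : 0 < S -> phi1 S <= PI / 2 / S.
Proof.
  intros HS. rewrite phi1_eq. pose proof PI2_pos.
  eapply Rle_trans. apply (RInt_le _ (fun _ => 1 / S)). lra.
  apply F1_ex. apply ex_RInt_const.
  intros t _. unfold F1.
  assert (H1 : sin t ^ 2 <= 1) by (pose proof (SIN_bound t); nra).
  assert (H0 : 0 <= sin t ^ 2) by apply pow2_ge_0.
  assert (HD : S <= sqrt (sin t ^ 2 + S ^ 2)).
  { pattern S at 1. rewrite <- (sqrt_pow2 S) by lra. apply sqrt_le_1_alt. lra. }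
  apply Rmult_le_reg_r with (sqrt (sin t ^ 2 + S ^ 2)). lra.
  unfold Rdiv. rewrite Rmult_assoc, Rinv_l by lra. assert (0 < / S) by (apply Rinv_0_lt_compat; lra). assert (S * / S = 1) by (field; lra). nra.
  rewrite RInt_const. unfold scal; simpl; unfold mult; simpl. right. field. lra.
Qed.

Lemma phi1_inv_spec alpha : 0 < alpha < 1 ->
  0 < phi1_inv alpha /\ phi1 (phi1_inv alpha) = alpha.
Proof.
  intros Ha.
  assert (Ex : exists s, 0 <= s /\ phi1 s = alpha).
  { pose proof PI_RGT_0.
    destruct (IVT (fun s => alpha - phi1 s) 0 (PI / alpha)) as [z [Hz Ez]].
    - apply continuity_minus. apply continuity_const. intros ? ?; reflexivity.
      apply phi1_cont.
    - apply Rdiv_lt_0_compat; lra.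
    - rewrite phi1_0. lra.
    - pose proof (phi1_upper (PI/alpha) ltac:(apply Rdiv_lt_0_compat; lra)).
      replace (PI / 2 / (PI / alpha)) with (alpha / 2) in H0 by (field; lra). lra.
    - exists z. split. lra. lra. }
  pose proof (epsilon_spec (inhabits 0) (fun s => 0 <= s /\ phi1 s = alpha) Ex) as [H1 H2].
  unfold phi1_inv. split; auto.
  destruct H1 as [H1|H1]; auto. rewrite <- H1 in H2. rewrite phi1_0 in H2. lra.
Qed.

Definition U (s t : R) := sqrt (sin t ^ 2 + s ^ 2).

Lemma U_cont s t : 0 < s -> continuous (U s) t.
Proof.
  intros Hs. apply (@ex_derive_continuous R_AbsRing R_NormedModule). unfold U.
  assert (0 < sin t ^ 2 + s ^ 2) by (pose proof (pow2_ge_0 (sin t)); nra).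
  auto_derive. lra.
Qed.

Lemma U_ex s a b : 0 < s -> ex_RInt (U s) a b.
Proof. intros. apply (ex_RInt_continuous (V:=R_CompleteNormedModule)). intros; now apply U_cont. Qed.

Lemma F2_pt s x : 0 < s -> F1 s x + U s x = (2 * sin x ^ 2 + s ^ 2) / sqrt (sin x ^ 2 + s ^ 2).
Proof.
  intros Hs. unfold F1, U.
  assert (0 < sin x ^ 2 + s ^ 2) by (pose proof (pow2_ge_0 (sin x)); nra).
  assert (0 < sqrt (sin x ^ 2 + s ^ 2)) by (apply sqrt_lt_R0; lra).
  assert (E: sqrt (sin x ^ 2 + s ^ 2) * sqrt (sin x ^ 2 + s ^ 2) = sin x ^ 2 + s ^ 2)
    by (apply sqrt_sqrt; lra).
  apply Rmult_eq_reg_r with (sqrt (sin x ^ 2 + s ^ 2)); [|lra].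
  rewrite Rmult_plus_distr_r. unfold Rdiv. rewrite !Rmult_assoc, Rinv_l by lra.
  rewrite E. ring.
Qed.

Lemma phi2_eq s : 0 < s -> phi2 s = phi1 s + RInt (U s) 0 (PI/2).
Proof.
  intros Hs. rewrite phi1_eq. unfold phi2.
  assert (Hex : ex_RInt (fun t => F1 s t + U s t) 0 (PI/2)).
  { apply (ex_RInt_plus (V:=R_CompleteNormedModule)). apply F1_ex. apply U_ex; auto. }
  rewrite (bridge _ _ _ (ex_RInt_ext (fun t => F1 s t + U s t) _ _ _
     (fun x _ => F2_pt s x Hs) Hex)).
  rewrite <- (RInt_ext (fun t => F1 s t + U s t)) by (intros; apply F2_pt; auto).
  apply (RInt_plus (V:=R_CompleteNormedModule)). apply F1_ex. apply U_ex; auto.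
Qed.

Section J.
Variable s : R.
Hypothesis Hs : 0 < s.
Let c := sqrt (1/2 + s^2).
Lemma c_pos : 0 < c. Proof. apply sqrt_lt_R0. nra. Qed.
Lemma c_sq : c * c = 1/2 + s^2. Proof. apply sqrt_sqrt. nra. Qed.

Definition G (t : R) := (sin t ^ 2 + s ^ 2 + c ^ 2) / (2 * c).

Lemma G_int : RInt G 0 (PI/2) = c * PI / 2.
Proof.
  pose proof c_pos. pose proof c_sq.
  rewrite (is_RInt_unique G 0 (PI/2) (minus
     (((PI/2 - sin (PI/2) * cos (PI/2))/2 + (s^2 + c^2) * (PI/2)) / (2*c))
     (((0 - sin 0 * cos 0)/2 + (s^2 + c^2) * 0) / (2*c)))).
  - rewrite sin_PI2, cos_PI2, sin_0, cos_0. unfold minus, plus, opp; simpl.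
    replace (s*(s*1) + c*(c*1)) with (2*(c*c) - 1/2) by nra. field. lra.
  - apply (is_RInt_derive (fun t => ((t - sin t * cos t)/2 + (s^2 + c^2) * t) / (2*c))).
    + intros x _. auto_derive. exact I. unfold G.
      assert (cos x * cos x = 1 - sin x * sin x) by (pose proof (sin2_cos2 x); unfold Rsqr in *; lra).
      replace (1 * cos x * cos x) with (1 - sin x * sin x) by lra. field. lra.
    + intros x _. apply (@ex_derive_continuous R_AbsRing R_NormedModule). unfold G.
      auto_derive. lra.
Qed.

Lemma GU_pos t : sin t ^ 2 <> 1/2 -> 0 < G t - U s t.
Proof.
  intros Hne. pose proof c_pos. pose proof c_sq. unfold G, U.
  set (u := sqrt (sin t ^ 2 + s ^ 2)).
  assert (Hu : u * u = sin t ^ 2 + s ^ 2) by (apply sqrt_sqrt; pose proof (pow2_ge_0 (sin t)); nra).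
  assert (Hu0 : 0 <= u) by apply sqrt_pos.
  assert (u <> c). { intro E. rewrite E in Hu. nra. }
  replace ((sin t ^ 2 + s ^ 2 + c ^ 2) / (2 * c) - u) with ((u - c)^2 / (2*c)).
  2:{ rewrite <- Hu. field. lra. }
  apply Rdiv_lt_0_compat; [|lra].
  assert (Hne2 : u - c <> 0) by lra. pose proof (Rsqr_pos_lt _ Hne2) as Hp. unfold Rsqr in Hp. nra.
Qed.

Lemma GU_cont t : continuous (fun t => G t - U s t) t.
Proof.
  apply (@ex_derive_continuous R_AbsRing R_NormedModule). pose proof c_pos.
  unfold G, U. assert (0 < sin t ^ 2 + s ^ 2) by (pose proof (pow2_ge_0 (sin t)); nra).
  auto_derive. lra.
Qed.

Lemma J_bound : RInt (U s) 0 (PI/2) < c * PI / 2.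
Proof.
  pose proof PI_RGT_0.
  assert (HexG : forall a b, ex_RInt G a b).
  { intros. apply (ex_RInt_continuous (V:=R_CompleteNormedModule)). intros.
    apply (@ex_derive_continuous R_AbsRing R_NormedModule). pose proof c_pos. unfold G.
    auto_derive. lra. }
  assert (HexD : forall a b, ex_RInt (fun t => G t - U s t) a b).
  { intros. apply (ex_RInt_continuous (V:=R_CompleteNormedModule)). intros. apply GU_cont. }
  assert (0 < RInt (fun t => G t - U s t) 0 (PI/2)).
  { rewrite <- (RInt_Chasles (V:=R_CompleteNormedModule) _ 0 (PI/4) (PI/2)) by auto.
    apply Rplus_lt_0_compat; apply RInt_gt_0; try lra; try (intros; apply GU_cont).
    - intros x Hx. apply GU_pos. intro E.
      assert (0 < cos (2 * x)) by (apply cos_gt_0; lra).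
      rewrite cos_2a_sin in H0. nra.
    - intros x Hx. apply GU_pos. intro E.
      assert (cos (2 * x) < 0) by (apply cos_lt_0; lra).
      rewrite cos_2a_sin in H0. nra. }
  rewrite (RInt_minus (V:=R_CompleteNormedModule)) in H0; auto.
  2:{ apply U_ex; auto. }
  rewrite G_int in H0. unfold minus, plus, opp in H0; simpl in H0. lra.
Qed.
End J.

Theorem mainTheorem16 (alpha delta : R) :
  0 < alpha < 1 -> 0 < delta ->
  L alpha delta > 4 / delta * (1 - PI ^ 2 / 16 - 1 / 2 * alpha ^ 2).
Proof.
  intros Ha Hd. unfold L. cbv zeta.
  destruct (phi1_inv_spec alpha Ha) as [Hs Hphi].
  set (s := phi1_inv alpha) in *.
  rewrite (phi2_eq s Hs), Hphi.
  pose proof (J_bound s Hs) as HJ.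
  set (J := RInt (U s) 0 (PI/2)) in *.
  assert (HJ0 : 0 <= J).
  { apply RInt_ge_0. pose proof PI2_pos; lra. apply U_ex; auto.
    intros; apply sqrt_pos. }
  set (c := sqrt (1/2 + s^2)) in *.
  assert (Hc : c * c = 1/2 + s^2) by (apply sqrt_sqrt; nra).
  assert (Hc0 : 0 <= c) by apply sqrt_pos.
  assert (HJ2 : J * J < c * c * PI * PI / 4) by nra.
  set (k := 1 + 2 * s^2).
  assert (Hk : 0 < k) by (unfold k; nra).
  assert (Hkey : (alpha + J)^2 < (1 + s^2) * (PI^2/4 + 2 * alpha^2)).
  { apply Rmult_lt_reg_l with k; auto.
    pose proof (pow2_ge_0 (alpha * k - J)).
    assert (k * (alpha + J)^2 <= k * alpha^2 * (1 + k) + J^2 * (1 + k)) by nra.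
    assert (J^2 * (1 + k) < k * PI^2 / 8 * (1 + k)).
    { apply Rmult_lt_compat_r. lra. unfold k in *. nra. }
    unfold k in *. nra. }
  apply Rmult_gt_compat_l. apply Rdiv_lt_0_compat; lra.
  assert (H1 : 0 < 4 * (1 + s^2)) by nra.
  assert ((alpha + J)^2 / (4 * (1 + s^2)) < PI^2/16 + 1/2 * alpha^2).
  { apply (Rmult_lt_reg_r (4 * (1 + s^2))); auto.
    unfold Rdiv. rewrite Rmult_assoc, Rinv_l by lra. nra. }
  lra.
Qed.
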